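(* Let $G$ be a finite group, $\alpha\in\mathbb{Z}_{\ge0}$, and let $(A,M)$ be an irreducible NIM-rep of the near-group fusion ring $K(G,\alpha)$ whose basis is partitioned into $p$ $G$-orbits $O_1,\dots,O_p$, with $O_i\cong G/H_i$ as $G$-sets for subgroups $H_i\le G$. For $1\le i,j\le p$ let $c_{i,j}$ be the coefficient of $m'$ in $X\vartriangleright m$ for $m\in O_i$, $m'\in O_j$ (this is independent of the choice of $m,m'$). If $p=1$ then $\alpha=c_{1,1}[G:H_1]-|H_1|/c_{1,1}$. If $p\ge2$ then $\alpha=\sum_{j=1}^p\frac{c_{i,j}c_{j,q}}{c_{i,q}}[G:H_j]$ for any orbit labels $i\neq q$ with $c_{i,q}>0$.
   Context: The near-group fusion ring $K(G,\alpha)$ is the free $\mathbb{Z}$-module with basis $G\cup\{X\}$, with multiplication given by the group law on $G$, $gX=Xg=X$ for $g\in G$, and $X^2=\sum_{g\in G}g+\alpha X$; involution $g^*=g^{-1}$, $X^*=X$. A NIM-rep of a fusion ring $(R,B)$ is a nonzero left $R$-module $A$ which is a free $\mathbb{Z}$-module with a fixed basis $M$, such that each $b\vartriangleright m$ is a non-negative integer combination of elements of $M$, and $(b\vartriangleright m,m')=(m,b^*\vartriangleright m')$ for the form making $M$ orthonormal. The elements of $G$ permute $M$. A NIM-rep is irreducible if no proper nonempty subset of $M$ spans an $R$-submodule. *)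

(* Defs.v *)
From mathcomp Require Import all_boot all_order all_algebra all_fingroup.
Set Implicit Arguments. Unset Strict Implicit. Unset Printing Implicit Defensive.

(* Basis of the near-group fusion ring K(G,alpha): G is the whole finGroupType
   gT; the basis element g is [Some g] and X is [None]. *)
Definition ng_basis (gT : finGroupType) := option gT.

(* Structure constants: ng_N alpha a b c = coefficient of c in a*b. *)
Definition ng_N (gT : finGroupType) (alpha : nat) (a b c : option gT) : nat :=
  match a, b, c with
  | Some g, Some h, Some k => nat_of_bool (g * h == k)%g
  | Some _, Some _, None => 0
  | Some _, None, None => 1
  | None, Some _, None => 1
  | Some _, None, Some _ => 0
  | None, Some _, Some _ => 0
  | None, None, Some _ => 1
  | None, None, None => alpha
  end.

Definition ng_dual (gT : finGroupType) (a : option gT) : option gT :=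
  match a with Some g => Some (g^-1)%g | None => None end.

(* A NIM-rep with basis the finite type T is given by the matrices
   act b m m' = coefficient of m' in  b |> m  (non-negative integers). *)
Definition is_NIMrep (gT : finGroupType) (alpha : nat) (T : finType)
  (act : option gT -> T -> T -> nat) : Prop :=
  [/\ (0 < #|T|)%N,
      (forall m m', act (Some 1%g) m m' = nat_of_bool (m == m')),
      (* module axiom: b |> (c |> m) = (b c) |> m *)
      (forall b c m m'',
          (\sum_(m' : T) act c m m' * act b m' m'' =
           \sum_(d : option gT) ng_N alpha b c d * act d m m'')%N) &
      (forall b m m', act b m m' = act (ng_dual b) m' m)].

Definition is_irreducible_NIMrep (gT : finGroupType) (alpha : nat) (T : finType)
  (act : option gT -> T -> T -> nat) : Prop :=
  is_NIMrep alpha act /\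
  forall S : {set T}, S != set0 -> S != setT ->
    exists b m m', [/\ m \in S, m' \notin S & (0 < act b m m')%N].

Definition ng_orbit (gT : finGroupType) (T : finType)
  (act : option gT -> T -> T -> nat) (m : T) : {set T} :=
  [set m' | [exists g : gT, act (Some g) m m' != 0%N]].

Definition ng_stab (gT : finGroupType) (T : finType)
  (act : option gT -> T -> T -> nat) (m : T) : {set gT} :=
  [set g : gT | act (Some g) m m != 0%N].

Definition ng_orbits (gT : finGroupType) (T : finType)
  (act : option gT -> T -> T -> nat) : {set {set T}} :=
  [set ng_orbit act m | m : T].

Definition orep (T : finType) (d : T) (O : {set T}) : T :=
  odflt d [pick x in O].

Definition ng_index (gT : finGroupType) (T : finType)
  (act : option gT -> T -> T -> nat) (m : T) : nat :=
  #|[set: gT] : ng_stab act m|%g.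

(* Main.v *)
Require Import Defs.
From mathcomp Require Import all_boot all_order all_algebra all_fingroup.
From mathcomp Require Import ring.
Import GRing.Theory Num.Theory.

Lemma opt_sum (gT : finType) (F : option gT -> nat) :
  (\sum_(d : option gT) F d = F None + \sum_(g : gT) F (Some g))%N.
Proof.
rewrite (bigD1 None) //=; congr (_ + _).
rewrite (reindex_omap Some id) //=; last by case.
by apply: eq_bigl => g; rewrite eqxx.
Qed.

Lemma sum_delta (T : finType) (a : T) (F : T -> nat) :
  (\sum_(x : T) nat_of_bool (a == x) * F x = F a)%N.
Proof.
rewrite (bigD1 a) // eqxx mul1n big1 => [|x /negbTE]; first by rewrite /= addn0.
by rewrite eq_sym => ->.
Qed.

Lemma sum_deltag (gT : finGroupType) (a : gT) (F : gT -> nat) :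
  (\sum_(x : gT) nat_of_bool (a == x) * F x = F a)%N.
Proof. exact: sum_delta. Qed.

Lemma sq_sum {gT : finGroupType} {alpha : nat} {T : finType}
  {act : option gT -> T -> T -> nat} (H : is_NIMrep alpha act) g m :
  (\sum_(m' : T) act (Some g) m m' * act (Some g) m m' = 1)%N.
Proof.
case: H => _ H1 HM HA.
have := HM (Some (g^-1)%g) (Some g) m m.
rewrite opt_sum /= mul0n add0n.
rewrite (eq_bigr (fun h => nat_of_bool (g^-1 * g == h)%g * act (Some h) m m)) //.
rewrite sum_deltag mulVg H1 eqxx /= => <-.
by apply: eq_bigr => mm _; congr (_ * _); rewrite [RHS]HA /= invgK.
Qed.

Lemma perm_row {gT : finGroupType} {alpha : nat} {T : finType}
  {act : option gT -> T -> T -> nat} (H : is_NIMrep alpha act) g m :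
  exists m0, forall m', act (Some g) m m' = nat_of_bool (m0 == m').
Proof.
have S := sq_sum H g m.
have [m0 Hm0] : exists m0, act (Some g) m m0 != 0%N.
  apply/existsP; apply: contraT; rewrite negb_exists => /forallP Hall.
  move: S; rewrite big1 // => x _; by have := Hall x; rewrite negbK => /eqP ->.
move: S; rewrite (bigD1 m0) //= => S.
have a1 : act (Some g) m m0 = 1%N.
  move: Hm0 S; case: (act (Some g) m m0) => [|[|k]] //= _.
move: S; rewrite a1 muln1 add1n => /eqP; rewrite eqSS => /eqP /eqP.
rewrite sum_nat_eq0 => /forallP Hr.
exists m0 => m'; case: (eqVneq m0 m') => [<-|ne] //=.
have := Hr m'; rewrite eq_sym ne /= muln_eq0 orbb => /eqP //.
Qed.

Definition sg {gT : finGroupType} {T : finType} (act : option gT -> T -> T -> nat)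
  (g : gT) (m : T) : T := odflt m [pick m' | act (Some g) m m' != 0%N].

Lemma actS {gT : finGroupType} {alpha : nat} {T : finType}
  {act : option gT -> T -> T -> nat} (H : is_NIMrep alpha act) g m m' :
  act (Some g) m m' = nat_of_bool (sg act g m == m').
Proof.
have [m0 Hm0] := perm_row H g m.
rewrite /sg; case: pickP => [x|none] /=.
  move=> Hx; have e : m0 = x; first by apply/eqP; move: Hx; rewrite Hm0; case: (m0 == x).
  by rewrite Hm0 e.
by have := none m0; rewrite Hm0 eqxx.
Qed.

Lemma s_mul {gT : finGroupType} {alpha : nat} {T : finType}
  {act : option gT -> T -> T -> nat} (H : is_NIMrep alpha act) g h m :
  sg act g (sg act h m) = sg act (g * h)%g m.
Proof.
have HM := (let: And4 _ _ HM _ := H in HM).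
have := HM (Some g) (Some h) m (sg act (g * h)%g m).
rewrite opt_sum /= mul0n add0n.
rewrite (eq_bigr (fun x => nat_of_bool (g * h == x)%g * act (Some x) m (sg act (g * h)%g m))) //.
rewrite sum_deltag (eq_bigr (fun x => nat_of_bool (sg act h m == x) * act (Some g) x (sg act (g * h)%g m))); last by move=> x _; rewrite (actS H).
rewrite sum_delta !(actS H) eqxx /=.
by case: eqP.
Qed.

Lemma s_one {gT : finGroupType} {alpha : nat} {T : finType}
  {act : option gT -> T -> T -> nat} (H : is_NIMrep alpha act) m :
  sg act 1%g m = m.
Proof.
have H1 := (let: And4 _ H1 _ _ := H in H1).
by have := H1 m m; rewrite (actS H) eqxx; case: eqP.
Qed.

Lemma X_row {gT : finGroupType} {alpha : nat} {T : finType}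
  {act : option gT -> T -> T -> nat} (H : is_NIMrep alpha act) g m m'' :
  act None (sg act g m) m'' = act None m m''.
Proof.
have HM := (let: And4 _ _ HM _ := H in HM).
have := HM None (Some g) m m''.
rewrite opt_sum /= mul1n [X in _ + X]big1 => [|x _]; last by rewrite mul0n.
rewrite addn0 => <-.
rewrite (eq_bigr (fun x => nat_of_bool (sg act g m == x) * act None x m'')); last by move=> x _; rewrite (actS H).
by rewrite sum_delta.
Qed.

Lemma X_col {gT : finGroupType} {alpha : nat} {T : finType}
  {act : option gT -> T -> T -> nat} (H : is_NIMrep alpha act) g m m'' :
  act None m (sg act g m'') = act None m m''.
Proof.
have HA := (let: And4 _ _ _ HA := H in HA).
by rewrite [LHS]HA [RHS]HA /= (X_row H).
Qed.

Lemma XX {gT : finGroupType} {alpha : nat} {T : finType}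
  {act : option gT -> T -> T -> nat} (H : is_NIMrep alpha act) m m'' :
  (\sum_(x : T) act None m x * act None x m'' =
   \sum_(g : gT) act (Some g) m m'' + alpha * act None m m'')%N.
Proof.
have HM := (let: And4 _ _ HM _ := H in HM).
rewrite HM opt_sum /= addnC; congr (_ + _).
by apply: eq_bigr => g _; rewrite mul1n.
Qed.

Lemma ngto1 {gT : finGroupType} {alpha : nat} {T : finType}
  {act : option gT -> T -> T -> nat} (H : is_NIMrep alpha act) :
  (fun m (g : gT) => sg act (g^-1)%g m)^~ 1%g =1 id.
Proof. by move=> m /=; rewrite invg1 (s_one H). Qed.

Lemma ngtoM {gT : finGroupType} {alpha : nat} {T : finType}
  {act : option gT -> T -> T -> nat} (H : is_NIMrep alpha act) x :
  act_morph (fun m (g : gT) => sg act (g^-1)%g m) x.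
Proof. by move=> a b /=; rewrite (s_mul H) invMg. Qed.

Definition ngto {gT : finGroupType} {alpha : nat} {T : finType}
  {act : option gT -> T -> T -> nat} (H : is_NIMrep alpha act) :=
  TotalAction (ngto1 H) (ngtoM H).

Lemma orbit_eq {gT : finGroupType} {alpha : nat} {T : finType}
  {act : option gT -> T -> T -> nat} (H : is_NIMrep alpha act) m :
  ng_orbit act m = orbit (ngto H) [set: gT] m.
Proof.
apply/setP => x; rewrite inE; apply/existsP/orbitP.
  case=> g; rewrite (actS H); case: (sg act g m =P x) => // <- _.
  by exists (g^-1)%g; rewrite ?inE //= invgK.
case=> g _ <-; exists (g^-1)%g; by rewrite (actS H) eqxx.
Qed.

Lemma stab_eq {gT : finGroupType} {alpha : nat} {T : finType}
  {act : option gT -> T -> T -> nat} (H : is_NIMrep alpha act) m :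
  ng_stab act m = ('C_[set: gT][m | ngto H])%g.
Proof.
have HA := (let: And4 _ _ _ HA := H in HA).
apply/setP => g; rewrite [in LHS]inE in_setI in_setT /= HA /= (actS H).
apply/idP/astab1P => /=.
  by case: (sg act _ m =P m).
by move=> ->; rewrite eqxx.
Qed.

Lemma index_eq {gT : finGroupType} {alpha : nat} {T : finType}
  {act : option gT -> T -> T -> nat} (H : is_NIMrep alpha act) m :
  ng_index act m = #|ng_orbit act m|.
Proof. by rewrite /ng_index (stab_eq H) (orbit_eq H) card_orbit. Qed.

Lemma stab_card {gT : finGroupType} {alpha : nat} {T : finType}
  {act : option gT -> T -> T -> nat} (H : is_NIMrep alpha act) m :
  #|ng_stab act m| = (\sum_(g : gT) act (Some g) m m)%N.
Proof.
rewrite -sum1_card big_mkcond /=; apply: eq_bigr => g _.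
by rewrite inE; case: (act (Some g) m m) (actS H g m m) => [|[|k]] //; case: eqP.
Qed.

Lemma orbit_row {gT : finGroupType} {alpha : nat} {T : finType}
  {act : option gT -> T -> T -> nat} (H : is_NIMrep alpha act) {m x y} :
  x \in ng_orbit act m -> act None x y = act None m y.
Proof.
by rewrite (orbit_eq H) => /orbitP [g _ <-]; rewrite /= (X_row H).
Qed.

Lemma orbit_col {gT : finGroupType} {alpha : nat} {T : finType}
  {act : option gT -> T -> T -> nat} (H : is_NIMrep alpha act) {m x y} :
  x \in ng_orbit act m -> act None y x = act None y m.
Proof.
by rewrite (orbit_eq H) => /orbitP [g _ <-]; rewrite /= (X_col H).
Qed.

Lemma orbit_self {gT : finGroupType} {alpha : nat} {T : finType}
  {act : option gT -> T -> T -> nat} (H : is_NIMrep alpha act) m :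
  m \in ng_orbit act m.
Proof. by rewrite (orbit_eq H) orbit_refl. Qed.

Lemma orbit_eqE {gT : finGroupType} {alpha : nat} {T : finType}
  {act : option gT -> T -> T -> nat} (H : is_NIMrep alpha act) x y :
  (ng_orbit act x == ng_orbit act y) = (x \in ng_orbit act y).
Proof. by rewrite !(orbit_eq H); apply/eqP/orbit_eqP. Qed.

Local Open Scope ring_scope.

Theorem corollary3p21 (gT : finGroupType) (alpha : nat) (T : finType)
  (act : option gT -> T -> T -> nat) :
  is_irreducible_NIMrep alpha act ->
  (* p = 1 *)
  (#|ng_orbits act| = 1%N ->
     forall m : T,
       let c := (act None m m)%:R : rat in
       alpha%:R = c * (ng_index act m)%:R
                  - (#|ng_stab act m|)%:R / c) /\
  (* p >= 2 *)
  ((2 <= #|ng_orbits act|)%N ->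
     forall mi mq : T,
       ng_orbit act mi != ng_orbit act mq ->
       (0 < act None mi mq)%N ->
       alpha%:R =
         \sum_(O in ng_orbits act)
           ((act None mi (orep mi O))%:R * (act None (orep mi O) mq)%:R
              / (act None mi mq)%:R
              * (ng_index act (orep mi O))%:R : rat)).
Proof.
move=> [H _].
have H1 := (let: And4 _ H1 _ _ := H in H1).
have inorbs : forall x, ng_orbit act x \in ng_orbits act.
  by move=> x; apply/imsetP; exists x.
split.
  move=> Hp m c.
  have allin : forall x, x \in ng_orbit act m.
    move=> x; have /cards1P [O HO] : #|ng_orbits act| == 1%N by rewrite Hp.
    move: (inorbs x) (inorbs m); rewrite HO !in_set1 => /eqP e1 /eqP e2.
    by rewrite -(orbit_eqE H) e1 e2.
  have Ho : ng_orbit act m = setT by apply/setP => x; rewrite in_setT allin.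
  have E := XX H m m.
  rewrite (eq_bigr (fun _ => act None m m * act None m m)%N) in E; last first.
    by move=> x _; rewrite (orbit_col H (allin x)) (orbit_row H (allin x)).
  rewrite sum_nat_const -(stab_card H) in E.
  have stpos : (0 < #|ng_stab act m|)%N.
    by apply/card_gt0P; exists 1%g; rewrite inE H1 eqxx.
  have cnz : c != 0.
    rewrite /c pnatr_eq0; apply/eqP => c0; move: E; rewrite c0 !muln0 addn0 => E.
    by rewrite -E in stpos.
  have Er := congr1 (fun n : nat => n%:R : rat) E; rewrite /= natrD !natrM in Er.
  rewrite (index_eq H) Ho cardsT.
  have -> : (#|ng_stab act m|)%:R = #|T|%:R * (c * c) - alpha%:R * c :> rat.
    by rewrite Er /c addrK.
  by field.
move=> Hp mi mq Hne Hpos.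
have E := XX H mi mq.
rewrite [X in _ = X + _]big1 in E; last first.
  move=> g _; apply/eqP; apply: contraNT Hne => Hg.
  by rewrite eq_sym (orbit_eqE H) inE; apply/existsP; exists g.
have {}E : (\sum_x act None mi x * act None x mq = alpha * act None mi mq)%N by rewrite E.
rewrite (partition_big_imset (ng_orbit act)) /= in E.
rewrite (eq_bigr (fun O => ng_index act (orep mi O) * (act None mi (orep mi O) * act None (orep mi O) mq))%N) in E; last first.
  move=> O /imsetP [y _ ->].
  set r := orep mi (ng_orbit act y).
  have rin : r \in ng_orbit act y.
    rewrite /r /orep; case: pickP => [z //|none].
    by have := none y; rewrite (orbit_self H).
  have er : ng_orbit act r = ng_orbit act y by apply/eqP; rewrite (orbit_eqE H).
  rewrite -er.
  rewrite (eq_bigr (fun _ => act None mi r * act None r mq)%N); last first.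
    move=> x /= /eqP ex.
    have xin : x \in ng_orbit act r by rewrite -ex (orbit_self H).
    by rewrite (orbit_col H xin) (orbit_row H xin).
  rewrite sum_nat_const (index_eq H); congr (_ * _)%N.
  by apply: eq_card => x; rewrite -(orbit_eqE H) unfold_in.
have cnz : (act None mi mq)%:R != 0 :> rat by rewrite pnatr_eq0 -lt0n.
apply: (mulIf cnz); rewrite mulr_suml -natrM -E natr_sum.
apply: eq_bigr => O _; rewrite !natrM.
by field.
Qed.
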